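(* Let $\Gamma$ be a finite connected tetravalent $G$-half-arc-transitive graph for some $G\le\mathrm{Aut}(\Gamma)$ having at least three $G$-alternating cycles, and let $r=\mathrm{rad}_G(\Gamma)$, $a=\mathrm{att}_G(\Gamma)$. Then the graph $\mathrm{Alt}_G(\Gamma)$ is regular of valence $2r/a$, and the induced action of $G$ on $\mathrm{Alt}_G(\Gamma)$ is vertex- and edge-transitive. Moreover, this action is arc-transitive if and only if $a$ does not divide $r$.
   Context: All graphs are finite and simple. For a tetravalent graph $\Gamma$ and $G\le \mathrm{Aut}(\Gamma)$, $\Gamma$ is $G$-half-arc-transitive if $G$ acts transitively on vertices and edges but not on arcs. Then the $G$-orbits on arcs give two paired orientations of the edges, and for each, every vertex is the tail of two and the head of two incident edges. A $G$-alternating cycle is a cycle in which every two consecutive edges have a common head or a common tail. All $G$-alternating cycles have the same length $2\,\mathrm{rad}_G(\Gamma)$, and any two $G$-alternating cycles sharing a vertex meet in the same number $\mathrm{att}_G(\Gamma)$ of vertices; it is known that $\mathrm{att}_G(\Gamma)$ divides $2\,\mathrm{rad}_G(\Gamma)$. The graph of $G$-alternating cycles $\mathrm{Alt}_G(\Gamma)$ has the $G$-alternating cycles of $\Gamma$ as vertices, two being adjacent whenever they have at least one vertex in common; $G$ acts on it naturally. *)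

(* Defs.v *)
From mathcomp Require Import all_boot all_order all_fingroup.
Set Implicit Arguments. Unset Strict Implicit. Unset Printing Implicit Defensive.

(* Simple graphs: vertex type V : finType, adjacency e : rel V (assumed
   symmetric and irreflexive in the theorem). Subgroups of Aut are
   G : {group {perm V}} whose elements preserve e. *)

Section AltCycles.
Variables (V : finType) (e : rel V) (G : {group {perm V}}).

Definition graph_auts : Prop :=
  forall g, g \in G -> forall x y, e (g x) (g y) = e x y.

Definition half_arc_transitive : Prop :=
  [/\ graph_auts,
      (forall x y, exists2 g, g \in G & g x = y),
      (forall x y u v, e x y -> e u v ->
          exists2 g, g \in G & [set g x; g y] = [set u; v]) &
      ~ (forall x y u v, e x y -> e u v ->
          exists2 g, g \in G & (g x = u /\ g y = v))].

(* (u,v) lies in the G-orbit of the arc (x,y): one of the G-orientations *)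
Definition in_orient (x y u v : V) : bool :=
  [exists g in G, (g x == u) && (g y == v)].

(* s lists the vertices of a cycle (in cyclic order) in which any two
   consecutive edges have a common head or a common tail w.r.t. the
   orientation given by the G-orbit of the arc (x,y). *)
Definition alt_seq (x y : V) (s : seq V) : bool :=
  [&& uniq s, 2 < size s, path.cycle e s &
      all (fun v => let p := prev s v in let n := next s v in
             (in_orient x y p v && in_orient x y n v) ||
             (in_orient x y v p && in_orient x y v n)) s].

Definition cyc_edges (s : seq V) : {set {set V}} :=
  [set [set v; next s v] | v in s].

(* C (an edge set) is a G-alternating cycle, for one of the G-orientations.
   (A duplicate-free sequence has length <= #|V|, so the bounded tuple
   quantification is no restriction.) *)
Definition is_alt_cycle (C : {set {set V}}) : bool :=
  [exists x, [exists y, e x y &&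
     [exists k : 'I_#|V|.+1, [exists t : k.-tuple V,
        alt_seq x y t && (cyc_edges t == C)]]]].

Definition alt_cycles : {set {set {set V}}} := [set C | is_alt_cycle C].

Definition cverts (C : {set {set V}}) : {set V} := \bigcup_(f in C) f.

Definition alt_adj (C D : {set {set V}}) : bool :=
  (C != D) && (cverts C :&: cverts D != set0).

(* rad_G: half the length of (any, here a chosen) G-alternating cycle *)
Definition radG : nat :=
  if [pick C in alt_cycles] is Some C then #|C| %/ 2 else 0.

(* att_G: size of the intersection of (any, here a chosen) two distinct
   G-alternating cycles sharing a vertex *)
Definition attG : nat :=
  if [pick p : {set {set V}} * {set {set V}} |
        [&& p.1 \in alt_cycles, p.2 \in alt_cycles & alt_adj p.1 p.2]]
  is Some p then #|cverts p.1 :&: cverts p.2| else 0.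

Definition act_cyc (g : {perm V}) (C : {set {set V}}) : {set {set V}} :=
  [set [set g v | v in f] | f : {set V} in C].

End AltCycles.

(* Main.v *)
Require Import Defs.
From mathcomp Require Import all_boot all_order all_fingroup.
From mathcomp Require Import zify.
Set Implicit Arguments. Unset Strict Implicit. Unset Printing Implicit Defensive.

Lemma set2_eqP (T : finType) (a b c d : T) :
  [set a; b] = [set c; d] -> (a = c /\ b = d) \/ (a = d /\ b = c).
Proof.
move=> E.
have ha : a \in [set c; d] by rewrite -E !inE eqxx.
have hb : b \in [set c; d] by rewrite -E !inE eqxx orbT.
have hc : c \in [set a; b] by rewrite E !inE eqxx.
have hd : d \in [set a; b] by rewrite E !inE eqxx orbT.
move: ha hb hc hd; rewrite !inE.
case/orP=> /eqP ha; case/orP=> /eqP hb; subst; try by auto.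
- by move=> _ /orP[] /eqP ->; auto.
- by move=> /orP[] /eqP -> _; auto.
Qed.

Lemma card2_eq (T : finType) (X : {set T}) a b :
  #|X| = 2 -> a \in X -> b \in X -> a != b -> X = [set a; b].
Proof.
move=> h2 ha hb hab; apply/eqP; rewrite eq_sym eqEcard h2 cards2 hab andbT.
by apply/subsetP=> z; rewrite !inE; case/orP=> /eqP ->.
Qed.

Lemma card2_uniq (T : finType) (X : {set T}) a b c :
  #|X| = 2 -> a \in X -> b \in X -> c \in X -> b != a -> c != a -> b = c.
Proof.
move=> h2 ha hb hc hba hca.
have := card2_eq h2 ha hb; rewrite eq_sym in hba => /(_ hba) E.
by move: hc; rewrite E !inE (negbTE hca) /= => /eqP.
Qed.

Lemma per_dvd (T : eqType) (F : T -> T) (D : T) m : 0 < m -> iter m F D = D ->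
  exists2 d, 0 < d & forall k, (iter k F D == D) = (d %| k).
Proof.
move=> m0 hm.
have ex : exists k, (0 < k) && (iter k F D == D) by exists m; rewrite m0 hm eqxx.
case: (ex_minnP ex) => d /andP[d0 /eqP hd] hmin.
have hq : forall q, iter (q * d) F D = D.
  by elim=> // q IH; rewrite mulSn iterD IH hd.
exists d => // k.
have E : iter k F D = iter (k %% d) F D by rewrite {1}(divn_eq k d) addnC iterD hq.
rewrite E /dvdn; apply/idP/idP; last by move/eqP ->.
move=> h; apply/negPn/negP; rewrite -lt0n => hr.
have := hmin _ (introT andP (conj hr h)).
by rewrite leqNgt ltn_pmod.
Qed.

Lemma arith n q : 0 < n -> ~~ odd n -> 0 < q -> q %| n -> (n %/ q %| n %/ 2) = ~~ odd q.
Proof.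
move=> n0 en q0 /dvdnP[m hm]; subst n; rewrite mulnK //.
case oq: (odd q) => /=.
- have om : ~~ odd m by move: en; rewrite oddM oq andbT.
  have [m' hm'] : exists m', m = m'.*2 by exists m./2; rewrite -[LHS]odd_double_half (negbTE om).
  subst m; clear en om; rewrite -muln2 -mulnA [2 * q]mulnC mulnA mulnK //.
  have m0 : 0 < m' by move: n0; rewrite -muln2; case: m'.
  by rewrite (mulnC m' 2) (mulnC m' q) dvdn_pmul2r // dvdn2 oq.
- have [q' hq'] : exists q', q = q'.*2 by exists q./2; rewrite -[LHS]odd_double_half oq.
  subst q; clear en; rewrite -muln2 mulnA mulnK //; exact: dvdn_mulr.
Qed.

Lemma card_dvd n q : 0 < q -> q %| n -> #|[set i : 'I_n | q %| i]| = n %/ q.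
Proof.
move=> q0 /dvdnP[m ->]; rewrite mulnK //.
rewrite -sum1_card big_mkcond /=.
rewrite (eq_bigr (fun i : 'I_(m * q) => if q %| i then 1 else 0)); last by move=> i _; rewrite inE.
elim: m => [|m IH]; first by rewrite big_ord0.
rewrite mulSnr big_split_ord /= -[m.+1]addn1; congr (_ + _); first exact: IH.
case: q q0 {IH} => // q' _.
rewrite big_ord_recl /= addn0 dvdn_mull ?dvdnn //.
rewrite big1 // => i _ /=; rewrite /bump /= add1n dvdn_addr ?dvdn_mull //.
case: (boolP (q'.+1 %| i.+1)) => // /dvdn_leq h.
by have := h (ltn0Sn _); rewrite ltnS leqNgt ltn_ord.
Qed.

Section Main.
Variables (V : finType) (e : rel V) (G : {group {perm V}}).
Hypothesis esymm : symmetric e.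
Hypothesis deg4 : forall x, #|[set y | e x y]| = 4.
Hypothesis hat : half_arc_transitive e G.
Variables x0 y0 : V.
Hypothesis ex0 : e x0 y0.

Local Notation O := (in_orient G x0 y0).

Lemma auts : graph_auts e G. Proof. by case: hat. Qed.
Lemma vtrans x y : exists2 g, g \in G & g x = y. Proof. by case: hat. Qed.
Lemma etrans x y u v : e x y -> e u v ->
  exists2 g, g \in G & [set g x; g y] = [set u; v].
Proof. by case: hat => _ _ h _; apply: h. Qed.

Lemma O_G g u v : g \in G -> O (g u) (g v) = O u v.
Proof.
move=> gG; apply/existsP/existsP => -[h /andP[hG /andP[/eqP hx /eqP hy]]].
- by exists (h * g^-1)%g; rewrite groupM ?groupV //= !permM hx hy !permK !eqxx.
- by exists (h * g)%g; rewrite groupM //= !permM hx hy !eqxx.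
Qed.

Lemma O_e u v : O u v -> e u v.
Proof.
case/existsP=> h /andP[hG /andP[/eqP <- /eqP <-]].
by rewrite (auts hG).
Qed.

Lemma O_tot u v : e u v -> O u v || O v u.
Proof.
move=> euv; have [g gG /set2_eqP [[hx hy]|[hx hy]]] := etrans ex0 euv.
- by apply/orP; left; apply/existsP; exists g; rewrite gG hx hy !eqxx.
- by apply/orP; right; apply/existsP; exists g; rewrite gG hx hy !eqxx.
Qed.

Lemma O_asym u v : O u v -> ~~ O v u.
Proof.
move=> huv; apply/negP => hvu; case: hat => _ _ _; apply.
move: huv hvu => /existsP[g1 /andP[g1G /andP[/eqP h1x /eqP h1y]]].
move=> /existsP[g2 /andP[g2G /andP[/eqP h2x /eqP h2y]]].
set k := (g1 * g2^-1)%g.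
have kG : k \in G by rewrite groupM ?groupV.
have kx : k x0 = y0 by rewrite /k permM h1x -h2y permK.
have ky : k y0 = x0 by rewrite /k permM h1y -h2x permK.
clearbody k.
have allO : forall p q, e p q -> O p q.
  move=> p q epq; case/orP: (O_tot epq) => // /existsP[h /andP[hG /andP[/eqP hx /eqP hy]]].
  by apply/existsP; exists (k * h)%g; rewrite groupM //= !permM kx ky hx hy !eqxx.
move=> x y u' v' /allO /existsP[g /andP[gG /andP[/eqP gx /eqP gy]]].
move=> /allO /existsP[g' /andP[g'G /andP[/eqP g'x /eqP g'y]]].
exists (g^-1 * g')%g; first by rewrite groupM ?groupV.
by rewrite !permM -gx -gy !permK g'x g'y.
Qed.

Lemma O_irr u : ~~ O u u.
Proof. by apply/negP => h; have := O_asym h; rewrite h. Qed.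

Definition Out v := [set w | O v w].
Definition In v := [set w | O w v].

Lemma Out_G g v : g \in G -> Out (g v) = g @: Out v.
Proof.
move=> gG; apply/setP=> w; rewrite inE.
apply/idP/imsetP => [h|[w' hw' ->]]; last by rewrite O_G //; rewrite inE in hw'.
by exists ((g^-1)%g w); rewrite ?permKV // inE -(O_G _ _ gG) permKV.
Qed.

Lemma In_G g v : g \in G -> In (g v) = g @: In v.
Proof.
move=> gG; apply/setP=> w; rewrite inE.
apply/idP/imsetP => [h|[w' hw' ->]]; last by rewrite O_G //; rewrite inE in hw'.
by exists ((g^-1)%g w); rewrite ?permKV // inE -(O_G _ _ gG) permKV.
Qed.

Lemma OutIn v : #|Out v| + #|In v| = 4.
Proof.
rewrite -(deg4 v) -cardsUI.
have -> : Out v :&: In v = set0.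
  apply/setP=> w; rewrite !inE; apply/negP=> /andP[h1 h2].
  by have := O_asym h1; rewrite h2.
rewrite cards0 addn0.
have -> : Out v :|: In v = [set y | e v y]; last by [].
apply/setP=> w; rewrite !inE.
apply/idP/idP => [/orP[/O_e //| /O_e]|/O_tot //]; by rewrite esymm.
Qed.

Lemma card_Out v : #|Out v| = 2.
Proof.
have cst : forall u, #|Out u| = #|Out x0|.
  move=> u; have [g gG <-] := vtrans x0 u.
  by rewrite Out_G // card_imset //; apply: perm_inj.
have cstI : forall u, #|In u| = 4 - #|Out x0|.
  by move=> u; rewrite -(cst u) -(OutIn u) addKn.
have E : \sum_(u : V) #|Out u| = \sum_(u : V) #|In u|.
  transitivity (\sum_(u : V) \sum_(w : V) (O u w : nat)).
    by apply: eq_bigr => u _; rewrite -sum1_card big_mkcond /=; apply: eq_bigr => w _; rewrite inE; case: (O u w).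
  rewrite exchange_big /=; apply: eq_bigr => w _.
  by rewrite -sum1_card [RHS]big_mkcond /=; apply: eq_bigr => u _; rewrite inE; case: (O u w).
move: E; rewrite (eq_bigr _ (fun u _ => cst u)) (eq_bigr _ (fun u _ => cstI u)) !sum_nat_const.
have n0 : 0 < #|V| by apply/card_gt0P; exists x0.
have hk : #|Out x0| <= 4 by rewrite -(OutIn x0) leq_addr.
rewrite (cst v); move: (#|Out x0|) (#|V|) hk n0 => k n hk n0.
move=> /eqP; rewrite eqn_mul2l eqn0Ngt n0 /= => /eqP; lia.
Qed.

Lemma card_In v : #|In v| = 2.
Proof. by have := OutIn v; rewrite card_Out; lia. Qed.


Lemma orient_cases x y : e x y ->
  (forall u v, in_orient G x y u v = O u v) \/ (forall u v, in_orient G x y u v = O v u).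
Proof.
move=> exy; case/orP: (O_tot exy) => /existsP[h /andP[hG /andP[/eqP hx /eqP hy]]].
- left=> u v; apply/existsP/existsP => -[g /andP[gG /andP[/eqP gx /eqP gy]]].
  + by exists (h * g)%g; rewrite groupM //= !permM hx hy gx gy !eqxx.
  + by exists (h^-1 * g)%g; rewrite groupM ?groupV //= !permM -hx -hy !permK gx gy !eqxx.
- right=> u v; apply/existsP/existsP => -[g /andP[gG /andP[/eqP gx /eqP gy]]].
  + by exists (h * g)%g; rewrite groupM //= !permM hx hy gx gy !eqxx.
  + by exists (h^-1 * g)%g; rewrite groupM ?groupV //= !permM -hx -hy !permK gx gy !eqxx.
Qed.

Definition loc (s : seq V) v :=
  (O (prev s v) v && O (next s v) v) || (O v (prev s v) && O v (next s v)).
Definition altO (s : seq V) := [&& uniq s, 2 < size s, path.cycle e s & all (loc s) s].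

Lemma alt_seqE x y s : e x y -> alt_seq e G x y s = altO s.
Proof.
move=> exy; rewrite /alt_seq /altO; congr [&& _, _, _ & _].
apply: eq_all => v; rewrite /loc.
case: (orient_cases exy) => E; rewrite !E //.
by rewrite orbC.
Qed.

Lemma inA C : reflect (exists s, altO s /\ cyc_edges s = C) (C \in alt_cycles e G).
Proof.
rewrite inE; apply: (iffP existsP) => [[x /existsP[y /andP[exy /existsP[k /existsP[t /andP[ht /eqP hC]]]]]]|[s [hs hC]]].
  by exists t; split => //; rewrite -(alt_seqE _ exy).
exists x0; apply/existsP; exists y0; rewrite ex0 /=.
have hsz : size s < #|V|.+1.
  by rewrite ltnS -(card_uniqP _); [apply: max_card | case/and4P: hs].
apply/existsP; exists (Ordinal hsz); apply/existsP; exists (in_tuple s).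
by rewrite /= (alt_seqE _ ex0) hs hC eqxx.
Qed.

Definition tl (s : seq V) x := O x (next s x).

Section AltSeq.
Variable s : seq V.
Hypothesis hs : altO s.

Lemma alt_uniq : uniq s. Proof. by case/and4P: hs. Qed.
Lemma alt_size : 2 < size s. Proof. by case/and4P: hs. Qed.
Lemma alt_cycle : path.cycle e s. Proof. by case/and4P: hs. Qed.
Lemma alt_loc x : x \in s -> loc s x. Proof. by case/and4P: hs => _ _ _ /allP; apply. Qed.

Lemma prev_neq_next x : x \in s -> prev s x != next s x.
Proof.
move=> xs; have [i q E] := rot_to xs.
rewrite -(prev_rot i alt_uniq) -(next_rot i alt_uniq) E.
have : uniq (x :: q) by rewrite -E rot_uniq alt_uniq.
have : 2 < size (x :: q) by rewrite -E size_rot alt_size.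
case: q {E} => [|a [|b q]] //= _.
rewrite !inE => /and3P[/norP[xa /norP[xb xq]] /norP[ab aq] _].
rewrite eq_sym (negbTE xa) (negbTE xb) eqxx.
have : a \notin b :: q by rewrite inE negb_or ab.
elim: q b {xb ab aq} xq => [|c q IH] b /=.
  by rewrite eqxx inE eq_sym.
rewrite inE negb_or => /andP[xc xq]; rewrite (negbTE xc) => haq.
by apply: IH => //; apply: contra haq => h; rewrite inE h orbT.
Qed.

Lemma tl_loc x : x \in s -> tl s x -> O x (prev s x) && O x (next s x).
Proof.
move=> xs ht; have := alt_loc xs; rewrite /loc.
case/orP=> /andP[h1 h2]; last by rewrite h1 h2.
by have := O_asym h2; rewrite /tl in ht; rewrite ht.
Qed.

Lemma hd_loc x : x \in s -> ~~ tl s x -> O (prev s x) x && O (next s x) x.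
Proof.
move=> xs ht; have := alt_loc xs; rewrite /loc.
case/orP=> /andP[h1 h2]; first by rewrite h1 h2.
by move: ht; rewrite /tl h2.
Qed.

Lemma Out_eq x : x \in s -> tl s x -> Out x = [set prev s x; next s x].
Proof.
move=> xs ht; case/andP: (tl_loc xs ht) => h1 h2.
by apply: card2_eq; rewrite ?card_Out ?inE ?prev_neq_next.
Qed.

Lemma In_eq x : x \in s -> ~~ tl s x -> In x = [set prev s x; next s x].
Proof.
move=> xs ht; case/andP: (hd_loc xs ht) => h1 h2.
by apply: card2_eq; rewrite ?card_In ?inE ?prev_neq_next.
Qed.

Lemma tl_next x : x \in s -> tl s (next s x) = ~~ tl s x.
Proof.
move=> xs; have ys : next s x \in s by rewrite mem_next.
have px : prev s (next s x) = x by rewrite prev_next // alt_uniq.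
case hx: (tl s x); case hy: (tl s (next s x)) => //=.
  case/andP: (tl_loc ys hy); rewrite px => h _.
  by have := O_asym h; rewrite /tl in hx; rewrite hx.
case/andP: (hd_loc ys (negbT hy)); rewrite px => h _.
by move: hx; rewrite /tl h.
Qed.

Lemma iter_next_in i x : x \in s -> iter i (next s) x \in s.
Proof. by move=> xs; elim: i => //= i IH; rewrite mem_next. Qed.

Lemma iter_prev_in i x : x \in s -> iter i (prev s) x \in s.
Proof. by move=> xs; elim: i => //= i IH; rewrite mem_prev. Qed.

Lemma iter_prev_next i x : iter i (prev s) (iter i (next s) x) = x.
Proof.
elim: i x => // i IH x; rewrite iterSr iterS prev_next ?IH //; exact: alt_uniq.
Qed.

Lemma card_edges : #|cyc_edges s| = size s.
Proof.
rewrite /cyc_edges card_in_imset; first by apply/card_uniqP; exact: alt_uniq.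
move=> v w vs ws /set2_eqP [[//]|[hv hw]].
have : prev s w = next s w.
  by rewrite -[in LHS]hw prev_next ?alt_uniq.
by move/eqP; rewrite (negbTE (prev_neq_next ws)).
Qed.

End AltSeq.

Lemma cverts_edges (s : seq V) : cverts (cyc_edges s) = [set x | x \in s].
Proof.
apply/setP=> z; rewrite inE; apply/bigcupP/idP.
  case=> f /imsetP[v vs ->]; rewrite !inE; case/orP=> /eqP ->; by rewrite ?mem_next.
by move=> zs; exists [set z; next s z]; [apply: imset_f | rewrite !inE eqxx].
Qed.

Definition walk (f : nat -> V) := forall i, f i.+2 != f i /\
  ((O (f i.+1) (f i) && O (f i.+1) (f i.+2)) || (O (f i) (f i.+1) && O (f i.+2) (f i.+1))).

Lemma walk_det f g : walk f -> walk g -> f 0 = g 0 -> f 1 = g 1 -> forall i, f i = g i.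
Proof.
move=> wf wg h0 h1.
suff : forall i, f i = g i /\ f i.+1 = g i.+1 by move=> H i; case: (H i).
elim=> [|i [IH1 IH2]]; first by split.
split=> //.
case: (wf i) (wg i) => nf hf [ng hg]; rewrite -IH1 -IH2 in ng hg.
case hO: (O (f i.+1) (f i)).
- move: hf hg; rewrite hO /= (negbTE (O_asym hO)) /= !orbF => hf hg.
  apply: (card2_uniq (card_Out (f i.+1)) (a := f i)); by rewrite ?inE.
- move: hf hg; rewrite hO /= => /andP[h1' hf] /andP[_ hg].
  apply: (card2_uniq (card_In (f i.+1)) (a := f i)); by rewrite ?inE.
Qed.

Lemma walk_next s x : altO s -> x \in s -> walk (fun i => iter i (next s) x).
Proof.
move=> hs xs i; set y := iter i.+1 (next s) x.
have ys : y \in s by apply: iter_next_in.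
have -> : iter i (next s) x = prev s y by rewrite /y iterS prev_next //; exact: alt_uniq hs.
have -> : iter i.+2 (next s) x = next s y by [].
split; first by rewrite eq_sym prev_neq_next.
by have := alt_loc hs ys; rewrite /loc orbC.
Qed.

Lemma walk_prev s x : altO s -> x \in s -> walk (fun i => iter i (prev s) x).
Proof.
move=> hs xs i; set y := iter i.+1 (prev s) x.
have ys : y \in s by apply: iter_prev_in.
have -> : iter i (prev s) x = next s y by rewrite /y iterS next_prev //; exact: alt_uniq hs.
have -> : iter i.+2 (prev s) x = prev s y by [].
split; first by rewrite prev_neq_next.
by have := alt_loc hs ys; rewrite /loc orbC (andbC (O y _)) (andbC (O (prev s y) _)).
Qed.

Lemma walk_G g f : g \in G -> walk f -> walk (fun i => g (f i)).
Proof.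
move=> gG wf i; case: (wf i) => h1 h2; split; first by rewrite (inj_eq perm_inj).
by rewrite !O_G.
Qed.

Lemma walk_shift f k : walk f -> walk (fun i => f (i + k)).
Proof. by move=> wf i; rewrite !addSn; apply: wf. Qed.

Lemma alt_map g s : g \in G -> altO s -> altO (map g s).
Proof.
move=> gG hs; have us := alt_uniq hs.
rewrite /altO (map_inj_uniq perm_inj) us size_map alt_size //=.
rewrite path.cycle_map (eq_cycle (e' := e)) ?alt_cycle //; last by move=> u v /=; rewrite (auts gG).
rewrite all_map; apply/allP => x xs /=.
by rewrite /loc prev_map ?next_map ?O_G //; try exact: perm_inj; apply: alt_loc.
Qed.

Lemma tl_map g s x : g \in G -> uniq s -> tl (map g s) (g x) = tl s x.
Proof. by move=> gG us; rewrite /tl next_map ?O_G //; exact: perm_inj. Qed.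

Lemma edges_map (g : {perm V}) s : uniq s -> cyc_edges (map g s) = act_cyc g (cyc_edges s).
Proof.
move=> us; apply/setP=> f; apply/imsetP/imsetP.
  case=> w /mapP[v vs ->] ->; exists [set v; next s v]; first exact: imset_f.
  by rewrite imsetU1 imset_set1 next_map //; exact: perm_inj.
case=> f' /imsetP[v vs ->] ->; exists (g v); first by apply: map_f.
by rewrite imsetU1 imset_set1 next_map //; exact: perm_inj.
Qed.

Lemma reach s x v : altO s -> x \in s -> v \in s ->
  exists2 k, k < size s & v = iter k (next s) x.
Proof.
move=> hs xs vs; have us := alt_uniq hs.
have fc : fconnect (next s) x v by rewrite (fconnect_cycle (cycle_next us) xs).
exists (findex (next s) x v); last by rewrite iter_findex.
by rewrite -(order_cycle (cycle_next us) us xs) findex_max.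
Qed.

Lemma iter_size s y : altO s -> y \in s -> iter (size s) (next s) y = y.
Proof.
move=> hs ys; have us := alt_uniq hs.
by rewrite -(order_cycle (cycle_next us) us ys) (iter_order_cycle (cycle_next us) ys ys).
Qed.

Lemma iter_inj s x i j : altO s -> x \in s -> i < size s -> j < size s ->
  iter i (next s) x = iter j (next s) x -> i = j.
Proof.
move=> hs xs hi hj E; have us := alt_uniq hs.
rewrite -(order_cycle (cycle_next us) us xs) in hi hj.
by rewrite -(findex_iter hi) E findex_iter.
Qed.

Lemma tl_edges s s' x : altO s -> altO s' -> cyc_edges s = cyc_edges s' ->
  x \in s -> tl s x = tl s' x.
Proof.
move=> hs hs' E xs.
have xs' : x \in s' by move: (cverts_edges s'); rewrite -E cverts_edges => /setP/(_ x); rewrite !inE xs.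
have : [set x; next s' x] \in cyc_edges s by rewrite E; apply: imset_f.
case/imsetP=> v vs /set2_eqP[[hv hn]|[hv hn]].
  by rewrite -hv in hn; rewrite /tl -hn.
have hp : next s' x = prev s x by rewrite hn hv prev_next //; exact: alt_uniq.
rewrite [tl s' x]/tl hp; case ht: (tl s x).
  by case/andP: (tl_loc hs xs ht).
case/andP: (hd_loc hs xs (negbT ht)) => h _.
by symmetry; apply/negbTE; apply: O_asym.
Qed.

Definition tp (C : {set {set V}}) x := [exists k : 'I_#|V|.+1, [exists t : k.-tuple V,
  [&& altO t, cyc_edges t == C, x \in t & tl t x]]].

Lemma tpE s x : altO s -> x \in s -> tp (cyc_edges s) x = tl s x.
Proof.
move=> hs xs; apply/idP/idP.
  case/existsP=> k /existsP[t /and4P[ht /eqP hE xt htl]].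
  by rewrite (tl_edges hs ht (esym hE) xs).
move=> htl; have hsz : size s < #|V|.+1.
  by rewrite ltnS -(card_uniqP _); [apply: max_card | exact: alt_uniq].
apply/existsP; exists (Ordinal hsz); apply/existsP; exists (in_tuple s).
by rewrite /= hs eqxx xs htl.
Qed.

Lemma edges_sub s s' x : altO s -> altO s' -> x \in s -> x \in s' -> tl s x = tl s' x ->
  cyc_edges s \subset cyc_edges s'.
Proof.
move=> hs hs' xs xs' htl; have us := alt_uniq hs; have us' := alt_uniq hs'.
have hn : next s x \in [set prev s' x; next s' x].
  case ht: (tl s x).
    rewrite -(Out_eq hs' xs'); last by rewrite -htl.
    by rewrite inE; case/andP: (tl_loc hs xs ht).
  rewrite -(In_eq hs' xs'); last by rewrite -htl ht.
  by rewrite inE; case/andP: (hd_loc hs xs (negbT ht)).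
apply/subsetP => f /imsetP[v vs ->].
have [k _ ->] := reach hs xs vs.
rewrite -iterS.
move: hn; rewrite !inE => /orP[] /eqP hn.
- have E := walk_det (walk_next hs xs) (walk_prev hs' xs') erefl hn.
  rewrite !E /=.
  set p := prev s' _.
  have -> : [set iter k (prev s') x; p] = [set p; next s' p].
    by rewrite /p next_prev // setUC.
  by apply: imset_f; rewrite /p mem_prev iter_prev_in.
- have E := walk_det (walk_next hs xs) (walk_next hs' xs') erefl hn.
  rewrite !E /=; apply: imset_f; exact: iter_next_in.
Qed.

Lemma uniq_cyc s s' x : altO s -> altO s' -> x \in s -> x \in s' -> tl s x = tl s' x ->
  cyc_edges s = cyc_edges s'.
Proof.
move=> hs hs' xs xs' htl; apply/eqP; rewrite eqEsubset.
by rewrite (edges_sub hs hs' xs xs' htl) (edges_sub hs' hs xs' xs (esym htl)).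
Qed.


Local Notation A := (alt_cycles e G).

Lemma act_mul (g h : {perm V}) (C : {set {set V}}) : act_cyc (g * h)%g C = act_cyc h (act_cyc g C).
Proof.
rewrite /act_cyc -imset_comp; apply: eq_imset => f /=.
by rewrite -imset_comp; apply: eq_imset => v /=; rewrite permM.
Qed.

Lemma act_inj (g : {perm V}) : injective (act_cyc g).
Proof. by apply: imset_inj; apply: imset_inj; exact: perm_inj. Qed.

Lemma act1 (C : {set {set V}}) : act_cyc 1%g C = C.
Proof.
rewrite /act_cyc -[RHS]imset_id; apply: eq_imset => f.
by rewrite -[RHS]imset_id; apply: eq_imset => v; rewrite perm1.
Qed.

Lemma A_G g C : g \in G -> C \in A -> act_cyc g C \in A.
Proof.
move=> gG /inA[s [hs <-]]; apply/inA; exists (map g s); split; first exact: alt_map.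
by rewrite edges_map //; exact: alt_uniq.
Qed.

Lemma cverts_act (g : {perm V}) (C : {set {set V}}) : cverts (act_cyc g C) = g @: cverts C.
Proof.
apply/setP=> z; apply/bigcupP/imsetP.
  case=> f /imsetP[f' hf' ->] /imsetP[v hv ->]; exists v => //.
  by apply/bigcupP; exists f'.
case=> v /bigcupP[f hf hv] ->; exists (g @: f); first exact: imset_f.
exact: imset_f.
Qed.

Lemma cvertsE (s : seq V) : cverts (cyc_edges s) = [set x | x \in s].
Proof. exact: cverts_edges. Qed.

Lemma tp_G g C x : g \in G -> C \in A -> x \in cverts C -> tp (act_cyc g C) (g x) = tp C x.
Proof.
move=> gG /inA[s [hs <-]]; rewrite cvertsE inE => xs.
have us := alt_uniq hs.
rewrite -edges_map // tpE ?tl_map ?tpE //; first exact: alt_map.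
exact: map_f.
Qed.

Lemma cyc_uniq C D x : C \in A -> D \in A -> x \in cverts C -> x \in cverts D ->
  tp C x = tp D x -> C = D.
Proof.
move=> /inA[s [hs <-]] /inA[s' [hs' <-]]; rewrite !cvertsE !inE => xs xs'.
rewrite tpE // tpE //; exact: uniq_cyc.
Qed.

Lemma three C D E x : C \in A -> D \in A -> E \in A ->
  x \in cverts C -> x \in cverts D -> x \in cverts E -> [|| C == D, C == E | D == E].
Proof.
move=> hC hD hE xC xD xE.
case hCD: (tp C x == tp D x); first by rewrite (cyc_uniq hC hD xC xD (eqP hCD)) eqxx.
case hCE: (tp C x == tp E x); first by rewrite (cyc_uniq hC hE xC xE (eqP hCE)) eqxx orbT.
suff -> : D = E by rewrite eqxx !orbT.
apply: (cyc_uniq hD hE xD xE).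
by move: hCD hCE; case: (tp C x); case: (tp D x); case: (tp E x).
Qed.

Section Ne.
Hypothesis Ane : exists C, C \in A.

Lemma exists_tp x b : exists2 C, C \in A & (x \in cverts C) && (tp C x == b).
Proof.
case: Ane => C0 /inA[s [hs hC0]].
have [y ys hy] : exists2 y, y \in s & tl s y = b.
  have : 0 < size s by move: (alt_size hs); case: (size s).
  case: s hs {hC0} => // z s' hs _.
  case hz: (tl (z :: s') z == b); first by exists z; rewrite ?mem_head ?(eqP hz).
  exists (next (z :: s') z); first by rewrite mem_next mem_head.
  by rewrite tl_next ?mem_head //; move: hz; case: b; case: (tl _ z).
have [g gG gy] := vtrans y x.
exists (act_cyc g (cyc_edges s)); first by apply: A_G => //; apply/inA; exists s.
rewrite -gy tp_G //; last by rewrite cvertsE inE.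
rewrite ?tpE // hy eqxx andbT cverts_act; apply: imset_f; by rewrite cvertsE inE.
by apply/inA; exists s.
Qed.

End Ne.

Definition other C x := odflt C [pick D in A | alt_adj C D && (x \in cverts D)].

Lemma other_uniq C D x : C \in A -> D \in A -> alt_adj C D ->
  x \in cverts C -> x \in cverts D -> tp D x = ~~ tp C x.
Proof.
move=> hC hD /andP[hne _] xC xD.
case E: (tp D x == tp C x).
  by move: hne; rewrite (cyc_uniq hD hC xD xC (eqP E)) eqxx.
by move: E; case: (tp D x); case: (tp C x).
Qed.

Lemma other_spec C x : (exists C, C \in A) -> C \in A -> x \in cverts C ->
  [/\ other C x \in A, alt_adj C (other C x), x \in cverts (other C x) &
      tp (other C x) x = ~~ tp C x].
Proof.
move=> Ane hC xC.
have [D hD /andP[xD /eqP htp]] := exists_tp Ane x (~~ tp C x).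
have adjD : alt_adj C D.
  rewrite /alt_adj; apply/andP; split.
    by apply/negP => /eqP E; move: htp; rewrite E; case: (tp D x).
  by apply/set0Pn; exists x; rewrite inE xC.
rewrite /other; case: pickP => [D' /andP[hD' /andP[adj' xD']]|/(_ D)].
  by split => //; apply: other_uniq.
by rewrite hD adjD xD.
Qed.

Lemma other_eq C D x : (exists C, C \in A) -> C \in A -> D \in A -> alt_adj C D ->
  x \in cverts C -> x \in cverts D -> D = other C x.
Proof.
move=> Ane hC hD adj xC xD; have [h1 h2 h3 h4] := other_spec Ane hC xC.
apply: (cyc_uniq hD h1 xD h3).
by rewrite h4 (other_uniq hC hD adj xC xD).
Qed.


Lemma seq_tl s b : altO s -> exists2 y, y \in s & tl s y = b.
Proof.
move=> hs; have : 0 < size s by move: (alt_size hs); case: (size s).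
case: s hs => // z s' hs _.
case hz: (tl (z :: s') z == b); first by exists z; rewrite ?mem_head ?(eqP hz).
exists (next (z :: s') z); first by rewrite mem_next mem_head.
by rewrite tl_next ?mem_head //; move: hz; case: b; case: (tl _ z).
Qed.

Lemma cyc_tp C b : C \in A -> exists2 y, y \in cverts C & tp C y = b.
Proof.
case/inA=> s [hs <-]; have [y ys hy] := seq_tl b hs.
by exists y; rewrite ?cvertsE ?inE ?tpE.
Qed.

Lemma vt C D : C \in A -> D \in A -> exists2 g, g \in G & act_cyc g C = D.
Proof.
move=> hC hD; have [x xC hx] := cyc_tp true hC; have [y yD hy] := cyc_tp true hD.
have [g gG gx] := vtrans x y; exists g => //.
apply: (cyc_uniq (x := y)) => //; first exact: A_G.
  by rewrite cverts_act -gx imset_f.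
by rewrite -[in LHS]gx tp_G // hx hy.
Qed.

Lemma adj_ex (C D : {set {set V}}) : alt_adj C D -> exists x, (x \in cverts C) && (x \in cverts D).
Proof. by case/andP=> _ /set0Pn[x]; rewrite inE; exists x. Qed.

Lemma et C D C' D' : C \in A -> D \in A -> C' \in A -> D' \in A ->
  alt_adj C D -> alt_adj C' D' ->
  exists2 g, g \in G & [set act_cyc g C; act_cyc g D] = [set C'; D'].
Proof.
move=> hC hD hC' hD' adj adj'.
have [x /andP[xC xD]] := adj_ex adj; have [y /andP[yC yD]] := adj_ex adj'.
have [g gG gx] := vtrans x y; exists g => //.
have hX := A_G gG hC; have hY := A_G gG hD.
have yX : y \in cverts (act_cyc g C) by rewrite cverts_act -gx imset_f.
have yY : y \in cverts (act_cyc g D) by rewrite cverts_act -gx imset_f.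
have nXY : act_cyc g C != act_cyc g D.
  by rewrite (inj_eq (@act_inj g)); case/andP: adj.
have nCD' : C' != D' by case/andP: adj'.
have := three hX hC' hD' yX yC yD; have := three hY hC' hD' yY yC yD.
rewrite (negbTE nCD') !orbF.
case/orP=> /eqP hY1; case/orP=> /eqP hX1.
- by move: nXY; rewrite hX1 hY1 eqxx.
- by rewrite hX1 hY1 setUC.
- by rewrite hX1 hY1.
- by move: nXY; rewrite hX1 hY1 eqxx.
Qed.

Lemma act_K (g : {perm V}) (C D : {set {set V}}) : act_cyc g C = D -> act_cyc g^-1 D = C.
Proof. by move=> <-; rewrite -act_mul mulgV act1. Qed.

Lemma swap_any C D X Y : C \in A -> D \in A -> X \in A -> Y \in A ->
  alt_adj C D -> alt_adj X Y ->
  forall t, t \in G -> act_cyc t C = D -> act_cyc t D = C ->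
  exists2 h, h \in G & (act_cyc h X = Y /\ act_cyc h Y = X).
Proof.
move=> hC hD hX hY adj adj' t tG tC tD.
have [g gG /set2_eqP[[gX gY]|[gX gY]]] := et hX hY hC hD adj' adj.
- exists (g * t * g^-1)%g; first by rewrite !groupM ?groupV.
  by rewrite !act_mul gX gY tC tD !(act_K gX) !(act_K gY).
- exists (g * t * g^-1)%g; first by rewrite !groupM ?groupV.
  by rewrite !act_mul gX gY tC tD !(act_K gX) !(act_K gY).
Qed.

Lemma arc_of_swap :
  (forall X Y, X \in A -> Y \in A -> alt_adj X Y ->
     exists2 h, h \in G & (act_cyc h X = Y /\ act_cyc h Y = X)) ->
  forall C D C' D', C \in A -> D \in A -> C' \in A -> D' \in A ->
    alt_adj C D -> alt_adj C' D' ->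
    exists2 g, g \in G & (act_cyc g C = C' /\ act_cyc g D = D').
Proof.
move=> sw C D C' D' hC hD hC' hD' adj adj'.
have [g gG /set2_eqP[[gX gY]|[gX gY]]] := et hC hD hC' hD' adj adj'.
  by exists g.
have [h hG [h1 h2]] := sw _ _ hC' hD' adj'.
exists (g * h)%g; first by rewrite groupM.
by rewrite !act_mul gX gY h1 h2.
Qed.


Lemma O_set g a b c d : g \in G -> O a b -> O c d -> [set g a; g b] = [set c; d] ->
  g a = c /\ g b = d.
Proof.
move=> gG hab hcd /set2_eqP[//|[ha hb]].
by have := O_asym hcd; rewrite -ha -hb O_G // hab.
Qed.

Lemma adj_G (g : {perm V}) (C D : {set {set V}}) : alt_adj (act_cyc g C) (act_cyc g D) = alt_adj C D.
Proof.
rewrite /alt_adj (inj_eq (@act_inj g)) !cverts_act -imsetI; last by move=> u v _ _; apply: perm_inj.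
by rewrite imset_eq0.
Qed.

Lemma other_G g C x : (exists C, C \in A) -> C \in A -> g \in G -> act_cyc g C = C ->
  x \in cverts C -> other C (g x) = act_cyc g (other C x).
Proof.
move=> Ane hC gG gC xC; have [h1 h2 h3 h4] := other_spec Ane hC xC.
symmetry; apply: other_eq => //; first exact: A_G.
- by rewrite -{1}gC adj_G.
- by rewrite -gC cverts_act imset_f.
- by rewrite cverts_act imset_f.
Qed.

Section Pos.
Variable s : seq V.
Hypothesis hs : altO s.
Variable v0 : V.
Hypothesis v0s : v0 \in s.
Hypothesis tl0 : tl s v0.

Local Notation n := (size s).
Local Notation C := (cyc_edges s).
Definition w i := iter i (next s) v0.

Lemma w_in i : w i \in s. Proof. exact: iter_next_in. Qed.
Lemma w_cv i : w i \in cverts C. Proof. by rewrite cvertsE inE w_in. Qed.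
Lemma wS i : w i.+1 = next s (w i). Proof. by rewrite /w iterS. Qed.
Lemma w_per i : w (i + n) = w i. Proof. by rewrite /w iterD iter_size. Qed.
Lemma w_tl i : tl s (w i) = ~~ odd i.
Proof. elim: i => [|i IH]; first exact: tl0. by rewrite wS tl_next ?w_in // IH /= negbK. Qed.
Lemma even_n : ~~ odd n.
Proof. by have := w_tl n; rewrite -[n]add0n w_per w_tl. Qed.
Lemma C_A : C \in A. Proof. by apply/inA; exists s. Qed.
Lemma Ane : exists C, C \in A. Proof. by exists C; exact: C_A. Qed.
Lemma w_tp i : tp C (w i) = ~~ odd i. Proof. by rewrite tpE ?w_in ?w_tl. Qed.
Lemma n_pos : 0 < n. Proof. by move: (alt_size hs); case: (size s). Qed.

Lemma rho_ex : exists2 g, g \in G & forall i, g (w i) = w i.+2.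
Proof.
have h01 : O (w 0) (w 1) by have := w_tl 0; rewrite /tl -wS.
have h23 : O (w 2) (w 3) by have := w_tl 2; rewrite /tl -wS.
have [g gG hg] := etrans (O_e h01) (O_e h23).
have [g0 g1] := O_set gG h01 h23 hg.
exists g => //.
have e0 : g (w 0) = w (0 + 2) by rewrite g0.
have e1 : g (w 1) = w (1 + 2) by rewrite g1.
have E := walk_det (walk_G gG (walk_next hs v0s)) (walk_shift 2 (walk_next hs v0s)) e0 e1.
by move=> i; have := E i; rewrite /= addn2.
Qed.

Lemma sigma_ex c : odd c -> exists2 g, g \in G & g (w c) = w c /\ g (w (c + c)) = w 0.
Proof.
case: c => // c' oc.
have hp : prev s (w c'.+1) = w c' by rewrite wS prev_next //; exact: alt_uniq.
have : ~~ tl s (w c'.+1) by rewrite w_tl oc.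
move=> /(hd_loc hs (w_in _)); rewrite hp -wS => /andP[h1 h2].
have [g gG hg] := etrans (O_e h2) (O_e h1).
have [g0 g1] := O_set gG h2 h1 hg.
exists g => //; split => //.
have e0 : g (w (0 + c'.+1)) = iter 0 (prev s) (w c'.+1) by rewrite add0n g1.
have e1 : g (w (1 + c'.+1)) = iter 1 (prev s) (w c'.+1) by rewrite add1n g0 /= hp.
have E := walk_det (walk_G gG (walk_shift c'.+1 (walk_next hs v0s))) (walk_prev hs (w_in c'.+1)) e0 e1.
by have := E c'.+1; rewrite -/(w _) => ->; rewrite /w iter_prev_next.
Qed.

Lemma act_fix g i j : g \in G -> g (w i) = w j -> odd i = odd j -> act_cyc g C = C.
Proof.
move=> gG gw hij; apply: (cyc_uniq (x := w j)) => //.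
- exact: A_G C_A.
- exact: C_A.
- by rewrite cverts_act -gw imset_f // w_cv.
- exact: w_cv.
- by rewrite -[in LHS]gw tp_G ?C_A ?w_cv // !w_tp hij.
Qed.

Definition Col i := other C (w i).

Lemma pos_main : exists2 q, 0 < q & q %| n /\
  forall i, i < n -> (Col i == Col 0) = (q %| i).
Proof.
have [rho rG rw] := rho_ex.
have rC : act_cyc rho C = C by apply: (act_fix (i := 0) (j := 2)).
set F := act_cyc rho; set D := Col 0.
have ColS : forall i, Col i.+2 = F (Col i).
  by move=> i; rewrite /Col -rw (other_G Ane C_A rG rC (w_cv i)).
have ColAdd : forall b j, Col (b + 2 * j) = iter j F (Col b).
  move=> b; elim=> [|j IH]; first by rewrite addn0.
  by rewrite mulnS addnCA addnC addn2 ColS IH.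
have Colper : forall i, Col (i + n) = Col i by move=> i; rewrite /Col w_per.
have hn2 : n = 2 * n./2 by rewrite mul2n -[LHS]odd_double_half (negbTE even_n).
have hnD : iter n./2 F D = D by rewrite -ColAdd -hn2 -[n]add0n Colper.
have n20 : 0 < n./2 by move: n_pos; rewrite {1}hn2 muln_gt0.
have [d d0 hd] := per_dvd n20 hnD.
have dn2 : d %| n./2 by rewrite -hd hnD.
case: (boolP [exists c : 'I_n, odd c && (Col c == D)]).
- case/existsP=> c /andP[oc /eqP hc].
  have [sg sG [s1 s2]] := sigma_ex oc.
  have sC : act_cyc sg C = C by apply: (act_fix (i := c) (j := c)).
  have sD : act_cyc sg D = D.
    by rewrite -{1}hc /Col -(other_G Ane C_A sG sC (w_cv c)) s1.
  have h2c : Col (c + c) = D.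
    by apply: (@act_inj sg); rewrite sD /Col -(other_G Ane C_A sG sC (w_cv _)) s2.
  have dc : d %| c by rewrite -hd -ColAdd add0n -/D mul2n -addnn h2c.
  have od : odd d.
    case: (boolP (odd d)) => // ed.
    have : 2 %| c by apply: dvdn_trans dc; rewrite dvdn2.
    by rewrite dvdn2 oc.
  have cd2 : coprime d 2 by rewrite coprimen2.
  exists d => //; split; first by rewrite hn2 dvdn_mull.
  move=> i _; case oi: (odd i).
  + have hj : i + n = c + 2 * (i + n - c)./2.
      have cle : c <= i + n by rewrite (leq_trans (ltnW (ltn_ord c))) // leq_addl.
      have ev : ~~ odd (i + n - c).
        by rewrite oddB // oddD oi (negbTE even_n) oc.
      by rewrite mul2n halfK (negbTE ev) subn0 subnKC.
    rewrite -Colper hj ColAdd hc hd.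
    rewrite -(Gauss_dvdr _ cd2) -(dvdn_addr _ dc) -hj dvdn_addl //.
    by rewrite hn2 dvdn_mull.
  + have hi : i = 0 + 2 * i./2 by rewrite add0n mul2n -[LHS]odd_double_half oi.
    rewrite {1}hi ColAdd hd -(Gauss_dvdr _ cd2); congr (_ %| _).
    by rewrite mul2n -[RHS]odd_double_half oi.
- move=> hB; exists (2 * d); first by rewrite muln_gt0 d0.
  split; first by rewrite hn2 dvdn_pmul2l.
  move=> i hi; case oi: (odd i).
  + have : ~~ (odd i && (Col i == D)).
      by move: hB; rewrite negb_exists => /forallP/(_ (Ordinal hi)).
    rewrite oi /= => /negbTE ->; apply/esym/negP => /(dvdn_trans (dvdn_mulr _ (dvdnn 2))).
    by rewrite dvdn2 oi.
  + have hi2 : i = 0 + 2 * i./2 by rewrite add0n mul2n -[LHS]odd_double_half oi.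
    by rewrite {1}hi2 ColAdd hd {2}hi2 add0n dvdn_pmul2l.
Qed.

End Pos.


Lemma adj_sym (C D : {set {set V}}) : alt_adj C D -> alt_adj D C.
Proof. by rewrite /alt_adj eq_sym setIC. Qed.

Section Final.
Hypothesis AneH : exists C, C \in A.

Lemma card_size s : altO s -> #|cverts (cyc_edges s)| = size s.
Proof.
move=> hs; rewrite cvertsE -(elimT card_uniqP (alt_uniq hs)).
by apply: eq_card => x; rewrite inE.
Qed.

Lemma cardC C : C \in A -> #|C| = #|cverts C|.
Proof. by case/inA=> s [hs <-]; rewrite card_size // card_edges. Qed.

Lemma act_card (g : {perm V}) (C : {set {set V}}) : #|act_cyc g C| = #|C|.
Proof. by rewrite card_imset //; apply: imset_inj; exact: perm_inj. Qed.

Lemma cardA C D : C \in A -> D \in A -> #|C| = #|D|.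
Proof. by move=> hC hD; have [g _ <-] := vt hC hD; rewrite act_card. Qed.

Lemma even_card C : C \in A -> ~~ odd #|C|.
Proof.
case/inA=> s [hs <-]; have [v vs hv] := seq_tl true hs.
by rewrite card_edges //; apply: (even_n hs vs hv).
Qed.

Lemma radE C : C \in A -> 2 * radG e G = #|C|.
Proof.
move=> hC; rewrite /radG; case: pickP => [C0 hC0|/(_ C)]; last by rewrite hC.
by rewrite (cardA hC hC0) divn2 mul2n halfK (negbTE (even_card hC0)) subn0.
Qed.

Lemma attE C D : C \in A -> D \in A -> alt_adj C D -> attG e G = #|cverts C :&: cverts D|.
Proof.
move=> hC hD adj; rewrite /attG; case: pickP => [[p1 p2] /and3P[h1 h2 h3]|/(_ (C, D))] /=; last first.
  by rewrite hC hD adj.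
have [g gG hg] := et h1 h2 hC hD h3 adj.
rewrite -(card_imset _ (@perm_inj _ g)) imsetI; last by move=> u v _ _; apply: perm_inj.
rewrite -!cverts_act; case/set2_eqP: hg => [[-> ->]|[-> ->]] //.
by rewrite setIC.
Qed.

Lemma valence C : C \in A -> #|[set D in A | alt_adj C D]| * attG e G = #|C|.
Proof.
move=> hC; set Adj := [set D in A | alt_adj C D].
rewrite (cardC hC) -[#|cverts C|]sum1_card.
transitivity (\sum_(D in Adj) #|cverts C :&: cverts D|).
  rewrite -sum_nat_const; apply: eq_bigr => D; rewrite inE => /andP[hD adj].
  exact: attE.
transitivity (\sum_(D in Adj) \sum_(x in cverts C) (if x \in cverts D then 1 else 0)).
  apply: eq_bigr => D _; rewrite -sum1_card -big_mkcondr /=.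
  by apply: eq_bigl => x; rewrite inE.
rewrite exchange_big /=; apply: eq_bigr => x xC.
have [h1 h2 h3 h4] := other_spec AneH hC xC.
rewrite (bigD1 (other C x)) /=; last by rewrite inE h1 h2.
rewrite h3 big1 // => D /andP[]; rewrite inE => /andP[hD adj] hne.
case: ifP => // xD; move: hne; by rewrite -(other_eq AneH hC hD adj xC xD) eqxx.
Qed.

Lemma att_pos C : C \in A -> 0 < attG e G.
Proof.
move=> hC; have [x xC _] := cyc_tp true hC.
have [h1 h2 h3 _] := other_spec AneH hC xC.
by rewrite (attE hC h1 h2); apply/card_gt0P; exists x; rewrite inE xC h3.
Qed.

Lemma part1 C : C \in A -> #|[set D in A | alt_adj C D]| = (2 * radG e G) %/ attG e G.
Proof. by move=> hC; rewrite (radE hC) -(valence hC) mulnK // (att_pos hC). Qed.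

Lemma part4 :
  (forall C D C' D', C \in A -> D \in A -> C' \in A -> D' \in A ->
     alt_adj C D -> alt_adj C' D' ->
     exists2 g, g \in G & (act_cyc g C = C' /\ act_cyc g D = D'))
  <-> ~~ (attG e G %| radG e G).
Proof.
case: AneH => C0 /inA[s [hs hC0]].
have [v0 v0s tl0] := seq_tl true hs.
have [q q0 [qn hq]] := pos_main hs v0s tl0.
set C := cyc_edges s.
have hC : C \in A by apply/inA; exists s.
have [hD adjCD w0D _] := other_spec AneH hC (w_cv v0s 0).
set D := other C (w s v0 0) in hD adjCD w0D.
have {}hq : forall i, i < size s -> (other C (w s v0 i) == D) = (q %| i) by exact: hq.
set wo := fun i : 'I_(size s) => w s v0 i.
have us := alt_uniq hs.
have winj : {in [set i : 'I_(size s) | q %| i] &, injective wo}.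
  by move=> i j _ _ /(iter_inj hs v0s (ltn_ord i) (ltn_ord j)) /val_inj.
have ID : cverts C :&: cverts D = wo @: [set i : 'I_(size s) | q %| i].
  apply/setP=> x; rewrite inE; apply/andP/imsetP.
    case=> xC xD; have xs : x \in s by move: xC; rewrite cvertsE inE.
    have E := other_eq AneH hC hD adjCD xC xD.
    have [k kn hk] := reach hs v0s xs.
    exists (Ordinal kn); last by rewrite hk.
    by rewrite inE /= -hq // /w -hk -E.
  case=> i; rewrite inE -hq // => /eqP hi ->; split; first exact: w_cv.
  have [_ _ h _] := other_spec AneH hC (w_cv v0s i).
  by rewrite -hi.
have aE : attG e G = size s %/ q.
  by rewrite (attE hC hD adjCD) ID card_in_imset // card_dvd.
have rE : radG e G = size s %/ 2.
  by rewrite -(card_edges hs) -/C -(radE hC) mulKn.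
rewrite aE rE (arith (n_pos hs) (even_n hs v0s tl0) q0 qn) negbK.
have tpw i : tp C (w s v0 i) = ~~ odd i by apply: w_tp.
have tpD x : x \in cverts C -> x \in cverts D -> tp D x = ~~ tp C x.
  by move=> xC xD; apply: other_uniq.
have tp0 : tp C (w s v0 0) = true by rewrite tpw.
have tpD0 : tp D (w s v0 0) = false by rewrite tpD ?tp0 ?w_cv.
split.
- move=> H; have [t tG [tC tD]] := H C D D C hC hD hD hC adjCD (adj_sym adjCD).
  set x := t (w s v0 0).
  have xD : x \in cverts D by rewrite -tC cverts_act imset_f // w_cv.
  have xC : x \in cverts C by rewrite -tD cverts_act imset_f.
  have tx : tp C x = false by rewrite -{1}tD tp_G.
  have xs : x \in s by move: xC; rewrite cvertsE inE.
  have E := other_eq AneH hC hD adjCD xC xD.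
  have [k kn hk] := reach hs v0s xs.
  have ok : odd k by move: tx; rewrite hk -/(w s v0 k) tpw; case: (odd k).
  have qk : q %| k by rewrite -hq // /w -hk -E.
  case: (boolP (odd q)) => // eq.
  have : 2 %| k by apply: dvdn_trans qk; rewrite dvdn2.
  by rewrite dvdn2 ok.
- move=> oq.
  have qlt : q < size s.
    rewrite ltn_neqAle dvdn_leq ?(n_pos hs) // andbT.
    by apply/negP => /eqP hqn; move: (even_n hs v0s tl0); rewrite -hqn oq.
  set y := w s v0 q.
  have yC : y \in cverts C by exact: w_cv.
  have yD : y \in cverts D.
    have [_ _ h _] := other_spec AneH hC yC.
    by move: (hq q qlt); rewrite dvdnn => /eqP <-.
  have tyC : tp C y = false by rewrite tpw oq.
  have tyD : tp D y = true by rewrite tpD ?tyC.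
  have [t tG ty] := vtrans (w s v0 0) y.
  have tC : act_cyc t C = D.
    apply: (cyc_uniq (x := y)) => //; first exact: A_G.
      by rewrite cverts_act -ty imset_f // w_cv.
    by rewrite -{1}ty tp_G ?w_cv // tp0 tyD.
  have tD : act_cyc t D = C.
    apply: (cyc_uniq (x := y)) => //; first exact: A_G.
      by rewrite cverts_act -ty imset_f.
    by rewrite -{1}ty tp_G // tpD0 tyC.
  apply: arc_of_swap => X Y hX hY adj.
  exact: (swap_any hC hD hX hY adjCD adj tG tC tD).
Qed.

End Final.
End Main.

Theorem proposition2p1 (V : finType) (e : rel V) (G : {group {perm V}}) :
  symmetric e -> irreflexive e ->
  (forall x, #|[set y | e x y]| = 4) ->
  (forall x y, connect e x y) ->
  half_arc_transitive e G ->
  2 < #|alt_cycles e G| ->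
  let r := radG e G in
  let a := attG e G in
  let A := alt_cycles e G in
  [/\ (forall C, C \in A -> #|[set D in A | alt_adj C D]| = (2 * r) %/ a),
      (forall C D, C \in A -> D \in A ->
         exists2 g, g \in G & act_cyc g C = D),
      (forall C D C' D', C \in A -> D \in A -> C' \in A -> D' \in A ->
         alt_adj C D -> alt_adj C' D' ->
         exists2 g, g \in G & [set act_cyc g C; act_cyc g D] = [set C'; D']) &
      ((forall C D C' D', C \in A -> D \in A -> C' \in A -> D' \in A ->
         alt_adj C D -> alt_adj C' D' ->
         exists2 g, g \in G & (act_cyc g C = C' /\ act_cyc g D = D'))
       <-> ~~ (a %| r))].
Proof.
move=> esymm eirr deg4 conn hat hA r a A.
have [C0 hC0] : exists C, C \in alt_cycles e G.
  by apply/card_gt0P; apply: leq_trans hA.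
have [x0 [y0 ex0]] : exists x y, e x y.
  move: hC0; rewrite inE => /existsP[x /existsP[y /andP[exy _]]]; by exists x, y.
have Ane : exists C, C \in alt_cycles e G by exists C0.
split.
- by move=> C hC; exact: (part1 esymm deg4 hat ex0 Ane hC).
- by move=> C D hC hD; exact: (vt esymm deg4 hat ex0 hC hD).
- by move=> C D C' D' hC hD hC' hD' h1 h2; exact: (et esymm deg4 hat ex0 hC hD hC' hD' h1 h2).
- exact: (part4 esymm deg4 hat ex0 Ane).
Qed.
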